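(* Let $A\in\mathbb{R}^{n\times n}$ be symmetric with smallest eigenvalue $\alpha_n$, $g\in\mathbb{R}^n$ nonzero, $\Delta>0$, and let $x_{opt}$ be a global minimizer of $\frac12x^TAx+x^Tg$ subject to $\|x\|\le\Delta$ with multiplier $\lambda_{opt}$, in the easy case $\lambda_{opt}>-\alpha_n$. Suppose $\|x_{opt}\|=\Delta$. Let $M=\begin{pmatrix}-A&gg^T/\Delta^2\\ I&-A\end{pmatrix}$ and let $y=(y_1^T,y_2^T)^T\in\mathbb{R}^{2n}$ ($y_1,y_2\in\mathbb{R}^n$) be a unit-length eigenvector of $M$ associated with $\lambda_{opt}$. Then, with $A_{opt}=A+\lambda_{opt}I$, $$\frac{\|y_1\|}{\|y_2\|}=\frac{\Delta}{\|A_{opt}^{-1}x_{opt}\|}.$$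
   Context: Norms are Euclidean. The multiplier satisfies $\lambda_{opt}\ge0$, $(A+\lambda_{opt}I)x_{opt}=-g$, $\lambda_{opt}(\Delta-\|x_{opt}\|)=0$, $A+\lambda_{opt}I\succeq0$. *)

(* Defs.v *)
From HB Require Import structures.
From mathcomp Require Import all_boot all_order all_algebra.
Set Implicit Arguments. Unset Strict Implicit. Unset Printing Implicit Defensive.
Import Order.TTheory GRing.Theory Num.Theory.
Local Open Scope ring_scope.

Definition vnorm (R : rcfType) (n : nat) (v : 'cV[R]_n) : R :=
  Num.sqrt (\sum_(i < n) v i ord0 ^+ 2).

Definition trs_obj (R : rcfType) (n : nat) (A : 'M[R]_n) (g x : 'cV[R]_n) : R :=
  2^-1 * (x^T *m A *m x) ord0 ord0 + (x^T *m g) ord0 ord0.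

Definition smallest_eigenvalue (R : rcfType) (n : nat) (A : 'M[R]_n) (alpha : R) :=
  eigenvalue A alpha /\ forall b, eigenvalue A b -> alpha <= b.

Definition Mtrs (R : rcfType) (n : nat) (A : 'M[R]_n) (g : 'cV[R]_n) (Delta : R)
  : 'M[R]_(n + n) :=
  block_mx (- A) ((Delta ^+ 2)^-1 *: (g *m g^T)) 1%:M (- A).

(* Main.v *)
Require Import Defs.
From HB Require Import structures.
From mathcomp Require Import all_boot all_order all_algebra.
Import Order.TTheory GRing.Theory Num.Theory.
Local Open Scope ring_scope.

Lemma vnormZ (R : rcfType) (n : nat) (k : R) (v : 'cV[R]_n) :
  vnorm (k *: v) = `|k| * vnorm v.
Proof.
rewrite /vnorm.
under eq_bigr => i _ do rewrite mxE exprMn.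
by rewrite -mulr_sumr sqrtrM ?sqr_ge0 // sqrtr_sqr.
Qed.

Lemma vnorm0 (R : rcfType) (n : nat) : vnorm (0 : 'cV[R]_n) = 0.
Proof.
rewrite /vnorm big1 ?sqrtr0 // => i _; by rewrite mxE expr0n.
Qed.

Theorem lemma5p6 (R : rcfType) (n : nat) (A : 'M[R]_n) (g : 'cV[R]_n)
    (Delta alpha lam : R) (xopt : 'cV[R]_n) (y : 'cV[R]_(n + n)) :
  A^T = A ->
  smallest_eigenvalue A alpha ->
  g != 0 ->
  0 < Delta ->
  (* xopt is a global minimizer of the trust-region subproblem *)
  vnorm xopt <= Delta ->
  (forall x : 'cV[R]_n, vnorm x <= Delta -> trs_obj A g xopt <= trs_obj A g x) ->
  (* lam is the associated multiplier *)
  0 <= lam ->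
  (A + lam%:M) *m xopt = - g ->
  lam * (Delta - vnorm xopt) = 0 ->
  (forall v : 'cV[R]_n, 0 <= (v^T *m (A + lam%:M) *m v) ord0 ord0) ->
  (* easy case *)
  - alpha < lam ->
  vnorm xopt = Delta ->
  (* y is a unit-length eigenvector of M for lam *)
  vnorm y = 1 ->
  Mtrs A g Delta *m y = lam *: y ->
  vnorm (usubmx y) / vnorm (dsubmx y)
    = Delta / vnorm (invmx (A + lam%:M) *m xopt).
Proof.
move=> _ [_ Hmin] _ _ _ _ _ Hx _ _ Heasy Hnx Hy Heig.
set B := A + lam%:M.
have HB : B \in unitmx.
  rewrite unitmxE unitfE; apply/negP => /det0P [v v0 Hv].
  have : eigenvalue A (- lam).
    apply/eigenvalueP; exists v => //.
    move: Hv; rewrite /B mulmxDr mul_mx_scalar => /eqP.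
    by rewrite addr_eq0 => /eqP ->; rewrite scaleNr.
  move/Hmin; rewrite lerNr => H.
  by move: Heasy; rewrite ltNge H.
set y1 := usubmx y; set y2 := dsubmx y.
have hy : y = col_mx y1 y2 by rewrite vsubmxK.
move: Heig; rewrite hy /Mtrs mul_block_col scale_col_mx => /eq_col_mx [E1 E2].
have E2' : y1 = B *m y2.
  by rewrite /B mulmxDl mul_scalar_mx -E2 mul1mx mulNmx addrC subrK.
set c := (Delta ^+ 2)^-1 * (g^T *m y2) 0 0.
have E1' : B *m y1 = c *: g.
  rewrite /B mulmxDl mul_scalar_mx -E1 mulNmx addNKr -scalemxAl -mulmxA.
  rewrite [g^T *m y2]mx11_scalar mul_mx_scalar scalerA.
  done.
have Hx' : xopt = - (invmx B *m g).
  by rewrite -mulmxN -Hx mulKmx.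
have Ey1 : y1 = (- c) *: xopt.
  by rewrite Hx' scalerN scaleNr opprK scalemxAr -E1' mulKmx.
have Ey2 : y2 = (- c) *: (invmx B *m xopt).
  by rewrite scalemxAr -Ey1 E2' mulKmx.
have c0 : c != 0.
  apply/eqP => c0; move: Hy; rewrite hy Ey1 Ey2 c0 oppr0 !scale0r.
  by rewrite col_mx0 vnorm0 => /eqP; rewrite eq_sym oner_eq0.
rewrite Ey1 Ey2 !vnormZ Hnx invfM mulrACA divff ?mul1r //.
by rewrite normr_eq0 oppr_eq0.
Qed.
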